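(* Let $(X,u)$ and $(Y,v)$ be Čech closure spaces, let $Y^X$ be the set of all continuous maps $(X,u)\to(Y,v)$, and let $\{\sigma_\alpha\}$ be a collection of Čech closure operators on $Y^X$. (1) If every $\sigma_\alpha$ is proper, then the infimum $\bigwedge\sigma_\alpha$ and the supremum $\bigvee\sigma_\alpha$ are proper. (2) If every $\sigma_\alpha$ is admissible, then the supremum $\bigvee\sigma_\alpha$ is admissible.
   Context: A Čech closure space $(X,u)$ is a set $X$ with an operator $u:\mathcal P(X)\to\mathcal P(X)$ satisfying $u(\emptyset)=\emptyset$, $A\subset u(A)$, and $u(A\cup B)=u(A)\cup u(B)$. The interior is $\mathrm{int}_u A=X\setminus u(X\setminus A)$; $U$ is a neighbourhood of $x$ if $x\in\mathrm{int}_uU$; $\mathcal N_\alpha(f)$ denotes the neighbourhood system of $f$ for $\sigma_\alpha$. A closure operator is determined by neighbourhood bases (families at each point that are nonempty, contain the point, and are downward directed) or subbases (nonempty families of sets containing the point, whose finite intersections form a base), via $u(A)=\{x:$ every basic neighbourhood of $x$ meets $A\}$. The infimum $\bigwedge\sigma_\alpha$ is the closure operator on $Y^X$ for which $\bigcap_\alpha\mathcal N_\alpha(f)$ is a neighbourhood base at each $f$; the supremum $\bigvee\sigma_\alpha$ is the closure operator for which $\bigcup_\alpha\mathcal N_\alpha(f)$ is a neighbourhood subbase at each $f$. A map $f:(X,u)\to(Y,v)$ is continuous if $f(u(A))\subset v(f(A))$ for all $A$. The product $(Z,w)\times(X,u)$ is $Z\times X$ with the closure operator for which the sets $W\times U$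 ($W$ a neighbourhood of $z$, $U$ of $x$) form a neighbourhood base at $(z,x)$. For $g:Z\times X\to Y$, $g^*(z)(x)=g(z,x)$. A closure operator $\sigma$ on $Y^X$ is proper if for every closure space $(Z,w)$, continuity of $g:(Z,w)\times(X,u)\to(Y,v)$ implies continuity of $g^*:(Z,w)\to(Y^X,\sigma)$; it is admissible if for every closure space $(Z,w)$ and every $g:Z\times X\to Y$ with $g^*(Z)\subset Y^X$, continuity of $g^*:(Z,w)\to(Y^X,\sigma)$ implies continuity of $g$. *)

(* Defs.v *)
From mathcomp Require Import all_boot.
From mathcomp Require Export classical_sets boolp.

Set Implicit Arguments.
Unset Strict Implicit.
Unset Printing Implicit Defensive.

Local Open Scope classical_set_scope.

Definition closure_op (T : Type) (u : set T -> set T) : Prop :=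
  [/\ u set0 = set0,
      (forall A, A `<=` u A) &
      (forall A B, u (A `|` B) = u A `|` u B)].

Definition cinterior (T : Type) (u : set T -> set T) (A : set T) : set T :=
  ~` u (~` A).

Definition cnbhd (T : Type) (u : set T -> set T) (x : T) (U : set T) : Prop :=
  cinterior u U x.

Definition ccontinuous (X Y : Type) (u : set X -> set X) (v : set Y -> set Y)
  (f : X -> Y) : Prop :=
  forall A : set X, f @` (u A) `<=` v (f @` A).

Definition cmap (X Y : Type) (u : set X -> set X) (v : set Y -> set Y) : Type :=
  {f : X -> Y | ccontinuous u v f}.

(* product closure: the sets W × U (W nbhd of z, U nbhd of x) form a base at (z,x) *)
Definition prod_closure (Z X : Type) (w : set Z -> set Z) (u : set X -> set X)
  (A : set (Z * X)) : set (Z * X) :=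
  [set p | forall (W : set Z) (U : set X), cnbhd w p.1 W -> cnbhd u p.2 U ->
     (A `&` [set q | W q.1 /\ U q.2]) !=set0].

(* infimum: ⋂_α N_α(f) is a neighbourhood base at f *)
Definition inf_closure (C I : Type) (F : I -> set C -> set C) (A : set C) : set C :=
  [set f | forall U : set C, (forall i, cnbhd (F i) f U) -> (U `&` A) !=set0].

(* supremum: ⋃_α N_α(f) is a neighbourhood subbase at f
   (basic neighbourhoods = finite intersections of subbasic ones) *)
Definition sup_closure (C I : Type) (F : I -> set C -> set C) (A : set C) : set C :=
  [set f | forall (n : nat) (idx : 'I_n -> I) (Us : 'I_n -> set C),
     (forall k, cnbhd (F (idx k)) f (Us k)) ->
     ([set g | forall k, Us k g] `&` A) !=set0].

(* proper closure operator on Y^X; gs plays the role of g^* *)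
Definition proper_cl (X Y : Type) (u : set X -> set X) (v : set Y -> set Y)
  (sigma : set (cmap u v) -> set (cmap u v)) : Prop :=
  forall (Z : Type) (w : set Z -> set Z), closure_op w ->
  forall (g : Z * X -> Y) (gs : Z -> cmap u v),
    (forall z x, proj1_sig (gs z) x = g (z, x)) ->
    ccontinuous (prod_closure w u) v g -> ccontinuous w sigma gs.

Definition admissible_cl (X Y : Type) (u : set X -> set X) (v : set Y -> set Y)
  (sigma : set (cmap u v) -> set (cmap u v)) : Prop :=
  forall (Z : Type) (w : set Z -> set Z), closure_op w ->
  forall (g : Z * X -> Y) (gs : Z -> cmap u v),
    (forall z x, proj1_sig (gs z) x = g (z, x)) ->
    ccontinuous w sigma gs -> ccontinuous (prod_closure w u) v g.

(* Main.v *)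
Require Import Defs.
From mathcomp Require Import all_boot classical_sets boolp.

Local Open Scope classical_set_scope.

Lemma cl_mono (T : Type) (w : set T -> set T) : closure_op w ->
  forall A B, A `<=` B -> w A `<=` w B.
Proof.
move=> [_ _ hU] A B AB.
have -> : B = A `|` B.
  by apply/seteqP; split => x; [move=> Bx; right | case=> //; apply: AB].
by rewrite hU => x wx; left.
Qed.

Lemma cl_finunion (T : Type) (w : set T -> set T) : closure_op w ->
  forall z n (P : nat -> set T), (forall k, (k < n)%N -> ~ w (P k) z) ->
  ~ w [set y | exists k, (k < n)%N /\ P k y] z.
Proof.
move=> hw z; elim=> [|n IH] P hP.
  have -> : [set y | exists k, (k < 0)%N /\ P k y] = set0.
    by apply/seteqP; split => y //= [k [//]].
  by case: hw => -> _ _.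
have -> : [set y | exists k, (k < n.+1)%N /\ P k y] =
   [set y | exists k, (k < n)%N /\ P k y] `|` P n.
  apply/seteqP; split => y /=.
    move=> [k [kn Pk]]; move: kn Pk; rewrite ltnS leq_eqVlt.
    case/orP => [/eqP -> Pn|kn Pk]; [by right|left; by exists k].
  by case=> [[k [kn Pk]]|Pn]; [exists k; split=> //; apply: ltnW|exists n].
case: (hw) => _ _ ->; case.
  by apply: IH => k kn; apply: hP; apply: ltnW.
by apply: hP.
Qed.

Theorem corollary2 (X Y : Type) (u : set X -> set X) (v : set Y -> set Y)
  (hu : closure_op u) (hv : closure_op v)
  (I : Type) (hI : inhabited I) (F : I -> set (cmap u v) -> set (cmap u v))
  (hF : forall i, closure_op (F i)) :
  ((forall i, proper_cl (F i)) ->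
     proper_cl (inf_closure F) /\ proper_cl (sup_closure F)) /\
  ((forall i, admissible_cl (F i)) -> admissible_cl (sup_closure F)).
Proof.
case: hI => i0.
split.
  move=> hP; split.
    move=> Z w hw g gs hgs hg A _ [z wAz <-] U hU.
    apply: contrapT => hne.
    have hc := hP i0 Z w hw g gs hgs hg A (gs z) (ex_intro2 _ _ z wAz erefl).
    apply: (hU i0); move: hc; apply: (@cl_mono _ _ (hF i0) (gs @` A) (~` U)) => f Af Uf.
    by apply: hne; exists f.
  move=> Z w hw g gs hgs hg A _ [z wAz <-] n idx Us hU.
  pose B k := [set y | exists h : (k < n)%N, ~ Us (Ordinal h) (gs y)].
  have hB : forall k, (k < n)%N -> ~ w (B k) z.
    move=> k kn wBz.
    have hc := hP (idx (Ordinal kn)) Z w hw g gs hgs hg (B k) (gs z)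
      (ex_intro2 _ _ z wBz erefl).
    apply: (hU (Ordinal kn)); move: hc; apply: (@cl_mono _ _ (hF _) (gs @` B k) (~` Us (Ordinal kn))).
    move=> f [y [h nU] <-]; move: nU.
    by have -> : Ordinal h = Ordinal kn by apply: val_inj.
  have := @cl_finunion _ _ hw z n B hB.
  apply: contra_notP => hne; apply: (@cl_mono _ _ hw A [set y | exists k, (k < n)%N /\ B k y] _ _ wAz) => a Aa.
  apply: contrapT => nex; apply: hne; exists (gs a); split; last by exists a.
  move=> k; apply: contrapT => nU; apply: nex; exists k; split => //.
  by exists (ltn_ord k); have -> : Ordinal (ltn_ord k) = k by apply: val_inj.
move=> hA Z w hw g gs hgs hg.
apply: (hA i0 Z w hw g gs hgs) => A f wf.
have sf := hg A f wf.
apply: contrapT => nF.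
have [h [/(_ ord0) h1 h2]] := sf 1%N (fun=> i0) (fun=> ~` (gs @` A))
  (fun=> ltac:(by rewrite /cnbhd /cinterior setCK)).
exact: h1.
Qed.
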